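(* Let $|\psi\rangle,|\phi\rangle,|e\rangle,|f\rangle$ be unit vectors in $\mathbb{C}^2$ and let $\mathcal{D}$ be the set of depolarizing channels $\Psi_\rho(A)=(\operatorname{tr}A)\rho$, $\rho$ a density operator on $\mathbb{C}^2$. Then $$\max_{\Psi\in\mathcal{D}}\left\{\frac12\langle e|\Psi(|\psi\rangle\langle\psi|)|e\rangle+\frac12\langle f|\Psi(|\phi\rangle\langle\phi|)|f\rangle\right\}=\frac12\left(1+|\langle e|f\rangle|\right).$$ This value equals $1$ if and only if $|\langle e|f\rangle|=1$; consequently, $(|\psi\rangle,|\phi\rangle)$ is jointly convertible into $(|e\rangle,|f\rangle)$ within $\mathcal{D}$ if and only if $|\langle e|f\rangle|=1$.
   Context: For a set $\mathcal{X}$ of quantum channels on $\mathcal{L}(\mathbb{C}^2)$, $(|\psi\rangle,|\phi\rangle)$ is jointly convertible into $(|e\rangle,|f\rangle)$ within $\mathcal{X}$ if there exists $\Psi\in\mathcal{X}$ with $\Psi(|\psi\rangle\langle\psi|)=|e\rangle\langle e|$ and $\Psi(|\phi\rangle\langle\phi|)=|f\rangle\langle f|$. *)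

(* Defs.v *)
From HB Require Import structures.
From mathcomp Require Import all_boot all_order all_algebra.
Set Implicit Arguments. Unset Strict Implicit. Unset Printing Implicit Defensive.
Import Order.TTheory GRing.Theory Num.Theory.
Local Open Scope ring_scope.

(* C : numClosedFieldType plays the role of the complex numbers;
   vectors of C^2 are column vectors 'cV[C]_2, operators are 'M[C]_2. *)

Definition adjmx (C : numClosedFieldType) (m n : nat) (A : 'M[C]_(m, n)) : 'M[C]_(n, m) :=
  (map_mx Num.conj A)^T.

Definition braket (C : numClosedFieldType) (u : 'cV[C]_2) (A : 'M[C]_2) (v : 'cV[C]_2) : C :=
  (adjmx u *m A *m v) 0 0.

Definition inner (C : numClosedFieldType) (u v : 'cV[C]_2) : C :=
  (adjmx u *m v) 0 0.

Definition unit_vector (C : numClosedFieldType) (v : 'cV[C]_2) : Prop :=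
  inner v v = 1.

Definition proj (C : numClosedFieldType) (v : 'cV[C]_2) : 'M[C]_2 := v *m adjmx v.

Definition density (C : numClosedFieldType) (rho : 'M[C]_2) : Prop :=
  adjmx rho = rho /\ (forall v : 'cV[C]_2, 0 <= braket v rho v) /\ \tr rho = 1.

Definition depol (C : numClosedFieldType) (rho : 'M[C]_2) : 'M[C]_2 -> 'M[C]_2 :=
  fun A => \tr A *: rho.

Definition depol_channels (C : numClosedFieldType) : ('M[C]_2 -> 'M[C]_2) -> Prop :=
  fun Psi => exists rho, density rho /\ Psi = depol rho.

Definition jointly_convertible (C : numClosedFieldType)
  (X : ('M[C]_2 -> 'M[C]_2) -> Prop) (psi phi e f : 'cV[C]_2) : Prop :=
  exists Psi, X Psi /\ Psi (proj psi) = proj e /\ Psi (proj phi) = proj f.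

Definition success (C : numClosedFieldType) (psi phi e f : 'cV[C]_2)
  (Psi : 'M[C]_2 -> 'M[C]_2) : C :=
  2^-1 * braket e (Psi (proj psi)) e + 2^-1 * braket f (Psi (proj phi)) f.

(* Main.v *)
Require Import Defs.
From HB Require Import structures.
From mathcomp Require Import all_boot all_order all_algebra.
From mathcomp Require Import ring.
Import Order.TTheory GRing.Theory Num.Theory.
Local Open Scope ring_scope.
Section S.
Variable C : numClosedFieldType.
Implicit Types u v x w e f psi phi : 'cV[C]_2.
Lemma sum2 (F : 'I_2 -> C) : \sum_(i < 2) F i = F 0 + F 1.
Proof. by rewrite big_ord_recl big_ord1; congr (F _ + F _); apply/val_inj. Qed.
Lemma innerE u v : inner u v = (u 0 0)^* * v 0 0 + (u 1 0)^* * v 1 0.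
Proof. by rewrite /inner /adjmx !mxE sum2 !mxE. Qed.
Lemma braketE u (A : 'M[C]_2) v : braket u A v =
  (u 0 0)^* * (A 0 0 * v 0 0 + A 0 1 * v 1 0) + (u 1 0)^* * (A 1 0 * v 0 0 + A 1 1 * v 1 0).
Proof. rewrite /braket /adjmx !mxE sum2 !mxE !sum2 !mxE. ring. Qed.
Lemma trE (A : 'M[C]_2) : \tr A = A 0 0 + A 1 1.
Proof. by rewrite /mxtrace sum2. Qed.
Lemma projE v i j : proj v i j = v i 0 * (v j 0)^*.
Proof. by rewrite /proj /adjmx !mxE big_ord1 !mxE. Qed.
Lemma inner_conj u v : (inner u v)^* = inner v u.
Proof. rewrite !innerE rmorphD !rmorphM /= !conjCK; ring. Qed.
Lemma braketZ u (A : 'M[C]_2) k : braket u (k *: A) u = k * braket u A u.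
Proof. rewrite !braketE !mxE; ring. Qed.
Lemma braket_proj x w : braket x (proj w) x = inner x w * (inner x w)^*.
Proof. rewrite braketE !projE inner_conj !innerE; ring. Qed.
Lemma tr_proj w : \tr (proj w) = inner w w.
Proof. rewrite trE !projE innerE; ring. Qed.
Lemma dens_proj w c : 0 <= c -> c * inner w w = 1 -> density (c *: proj w).
Proof.
move=> c0 hc; split; [|split].
- apply/matrixP => i j; rewrite {1}/adjmx [in LHS]mxE [in LHS]mxE [in LHS]mxE [in RHS]mxE !projE rmorphM rmorphM /= conjCK geC0_conj //.
  ring.
- by move=> v; rewrite braketZ braket_proj mulr_ge0 // mul_conjC_ge0.
- by rewrite mxtraceZ tr_proj.
Qed.
Lemma success_depol psi phi e f rho : unit_vector psi -> unit_vector phi ->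
  success psi phi e f (depol rho) = 2^-1 * braket e rho e + 2^-1 * braket f rho f.
Proof. by move=> hp hf; rewrite /success /depol !braketZ !tr_proj hp hf !mul1r. Qed.
Lemma psd_aux (r00 r01 r10 r11 n00 n01 n10 n11 : C) : n00 * n11 = n01 * n10 ->
  (r00 * n00 + r01 * n10 + r10 * n01 + r11 * n11) * n00 =
  n00 * (r00 * n00 + r01 * n10) + n01 * (r10 * n00 + r11 * n10).
Proof.
move=> h; apply/eqP; rewrite -subr_eq0; apply/eqP.
have -> : (r00 * n00 + r01 * n10 + r10 * n01 + r11 * n11) * n00 -
  (n00 * (r00 * n00 + r01 * n10) + n01 * (r10 * n00 + r11 * n10)) =
  r11 * (n00 * n11 - n01 * n10) by ring.
by rewrite h subrr mulr0.
Qed.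

Lemma upper e f rho : unit_vector e -> unit_vector f -> density rho ->
  braket e rho e + braket f rho f <= 1 + `|inner e f|.
Proof.
move=> he hf [_ [hpos htr]].
move: he hf; rewrite /unit_vector !innerE => he hf.
have hs2 := normCK (inner e f).
have s0 : 0 <= `|inner e f| := normr_ge0 _.
move: hs2 s0; rewrite innerE.
set s := `|_|.
set e0 := e 0 0; set e1 := e 1 0; set f0 := f 0 0; set f1 := f 1 0.
move=> hs2 s0.
have sC : s^* = s by rewrite geC0_conj.
move: htr; rewrite trE => htr.
rewrite !braketE.
set r00 := rho 0 0; set r01 := rho 0 1; set r10 := rho 1 0; set r11 := rho 1 1.
set n00 := 1 + s - e0 * e0^* - f0 * f0^*.
set n11 := 1 + s - e1 * e1^* - f1 * f1^*.
set n01 := - (e0 * e1^*) - f0 * f1^*.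
set n10 := - (e1 * e0^*) - f1 * f0^*.
have hT : 1 + s - ((e0^* * (r00 * e0 + r01 * e1) + e1^* * (r10 * e0 + r11 * e1)) +
   (f0^* * (r00 * f0 + r01 * f1) + f1^* * (r10 * f0 + r11 * f1))) =
   r00 * n00 + r01 * n10 + r10 * n01 + r11 * n11.
  apply/eqP; rewrite -subr_eq0; apply/eqP.
  set L := (X in X - _ = 0).
  have -> : L - (r00 * n00 + r01 * n10 + r10 * n01 + r11 * n11) = (1 + s) * (1 - (r00 + r11)).
    by rewrite /L /n00 /n11 /n01 /n10; ring.
  by rewrite htr subrr mulr0.
rewrite -subr_ge0 hT.
have c00 : n00^* = n00. rewrite /n00 !rmorphB rmorphD /= conjC1 sC !rmorphM /= !conjCK; ring.
have c10 : n10 = n01^*. rewrite /n10 /n01 !rmorphB rmorphN /= !rmorphM /= !conjCK; ring.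
have hdet : n00 * n11 = n01 * n10.
  apply/eqP; rewrite -subr_eq0; apply/eqP.
  rewrite rmorphD !rmorphM /= !conjCK in hs2.
  have -> : n00 * n11 - n01 * n10 = (1 + s)^+2 - (1 + s) * ((e0^* * e0 + e1^* * e1) + (f0^* * f0 + f1^* * f1))
     + (e0^* * e0 + e1^* * e1) * (f0^* * f0 + f1^* * f1)
     - (e0^* * f0 + e1^* * f1) * (e0 * f0^* + e1 * f1^*) by rewrite /n00 /n11 /n01 /n10; ring.
  rewrite he hf -hs2; ring.
have hsum : n00 + n11 = s *+ 2.
  have -> : n00 + n11 = s *+ 2 + 1 + 1 - ((e0^* * e0 + e1^* * e1) + (f0^* * f0 + f1^* * f1)).
    by rewrite /n00 /n11; ring.
  rewrite he hf; ring.
have n11E : n11 = s *+ 2 - n00 by rewrite -hsum; ring.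
have n00r : n00 \is Num.real by apply/CrealP.
have n00ge : 0 <= n00.
  case: (boolP (0 <= n00)) => // hn; exfalso.
  have hlt : n00 < 0 by rewrite real_ltNge // ?real0.
  have h11 : 0 < n11 by rewrite n11E subr_gt0 (lt_le_trans hlt) // mulrn_wge0.
  have : 0 < (- n00) * n11 by rewrite mulr_gt0 // oppr_gt0.
  rewrite mulNr hdet c10 oppr_gt0.
  by move=> hl; rewrite (le_gtF (mul_conjC_ge0 n01)) in hl.
case: (eqVneq n00 0) => [h0 | hn0].
  have h01 : n01 = 0.
    by apply/eqP; rewrite -mul_conjC_eq0 -c10 -hdet h0 mul0r.
  have h10 : n10 = 0 by rewrite c10 h01 conjC0.
  have := hpos (\col_(i < 2) [:: 0; 1]`_i).
  rewrite braketE !mxE /= conjC0 conjC1 !(mul0r, mulr0, mul1r, mulr1, add0r, addr0) => hr.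
  rewrite h0 h01 h10 !mulr0 !add0r n11E h0 subr0.
  by rewrite mulr_ge0 // mulrn_wge0.
have n00gt : 0 < n00 by rewrite lt_def hn0.
have := hpos (\col_(i < 2) [:: n00; n10]`_i).
rewrite braketE !mxE /= c00 c10 conjCK -c10 -(psd_aux r00 r01 r10 r11 _ _ _ _ hdet).
by rewrite pmulr_lge0.
Qed.
Lemma innerDZ x e f (u : C) : inner x (e + u *: f) = inner x e + u * inner x f.
Proof. rewrite !innerE !mxE; ring. Qed.

Lemma exist_max psi phi e f : unit_vector psi -> unit_vector phi ->
  unit_vector e -> unit_vector f ->
  exists Psi, depol_channels Psi /\ success psi phi e f Psi = 2^-1 * (1 + `|inner e f|).
Proof.
move=> hp hq he hf.
have hfe : inner f e = (inner e f)^* by rewrite inner_conj.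
case: (eqVneq (inner e f) 0) => [ha | ha].
  exists (depol (1 *: proj e)); split.
    exists (1 *: proj e); split => //; apply: dens_proj; first exact: ler01.
    by rewrite he mul1r.
  rewrite success_depol // !braketZ !braket_proj he hfe ha conjC0 conjC1 normr0; ring.
set a := inner e f in ha hfe *.
set s := `|a|.
have s0 : 0 <= s := normr_ge0 _.
have sn0 : s != 0 by rewrite normr_eq0.
have sC : s^* = s by rewrite geC0_conj.
have s1 : 1 + s != 0 by rewrite gt_eqF // (lt_le_trans ltr01) // lerDl.
have hca : a^* = s ^+ 2 / a by rewrite /s normCK [a * _]mulrC mulfK.
have two0 : (2 : C) != 0 by rewrite pnatr_eq0.
pose u := a^* / s.
have uC : u^* = a / s by rewrite /u rmorphM fmorphV /= conjCK sC.
have uE : u = a^* / s by [].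
clearbody u.
pose w := e + u *: f.
pose c := (2 * (1 + s))^-1.
exists (depol (c *: proj w)); split.
  exists (c *: proj w); split => //; apply: dens_proj.
    by rewrite invr_ge0 mulr_ge0 // ?ler0n // addr_ge0 // ler01.
  rewrite /w innerDZ -[inner (e + u *: f) e]inner_conj -[inner (e + u *: f) f]inner_conj
    !innerDZ he hf hfe !rmorphD !rmorphM /= conjC1 conjCK uC -/a /c uE hca.
  by field; rewrite sn0 ha s1.
rewrite success_depol // !braketZ !braket_proj /w !innerDZ he hf hfe !rmorphD !rmorphM /=
  conjC1 conjCK uC -/a /c uE hca.
by field; rewrite sn0 ha s1.
Qed.
Lemma ord2_cases (i : 'I_2) : i = 0 \/ i = 1.
Proof. by case: i => [[|[|//]]] ?; [left|right]; apply/val_inj. Qed.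

Lemma proj_eq e f : unit_vector e -> unit_vector f -> `|inner e f| = 1 -> proj f = proj e.
Proof.
move=> he hf hs.
set a := inner e f in hs *.
have haa : a * a^* = 1 by rewrite -normCK hs expr1n.
have A1 : f 0 0 * (e 0 0)^* + f 1 0 * (e 1 0)^* = a by rewrite /a innerE; ring.
have A2 : e 0 0 * (f 0 0)^* + e 1 0 * (f 1 0)^* = a^* by rewrite /a innerE rmorphD !rmorphM /= !conjCK; ring.
have U1 : e 0 0 * (e 0 0)^* + e 1 0 * (e 1 0)^* = 1 by rewrite -he innerE; ring.
have U2 : f 0 0 * (f 0 0)^* + f 1 0 * (f 1 0)^* = 1 by rewrite -hf innerE; ring.
have hg : (f 0 0 - a * e 0 0) * (f 0 0 - a * e 0 0)^* + (f 1 0 - a * e 1 0) * (f 1 0 - a * e 1 0)^* = 0.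
  rewrite !rmorphB !rmorphM /=.
  have -> : (f 0 0 - a * e 0 0) * ((f 0 0)^* - a^* * (e 0 0)^*) +
      (f 1 0 - a * e 1 0) * ((f 1 0)^* - a^* * (e 1 0)^*) =
    (f 0 0 * (f 0 0)^* + f 1 0 * (f 1 0)^*) - a^* * (f 0 0 * (e 0 0)^* + f 1 0 * (e 1 0)^*)
    - a * (e 0 0 * (f 0 0)^* + e 1 0 * (f 1 0)^*) + a * a^* * (e 0 0 * (e 0 0)^* + e 1 0 * (e 1 0)^*) by ring.
  rewrite A1 A2 U1 U2 mulr1 [a^* * a]mulrC haa; ring.
move/eqP: hg; rewrite paddr_eq0 ?mul_conjC_ge0 // !mul_conjC_eq0 !subr_eq0 => /andP[/eqP h0 /eqP h1].
have hfi : forall i : 'I_2, f i 0 = a * e i 0.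
  by move=> i; case: (ord2_cases i) => ->.
apply/matrixP => i j; rewrite !projE !hfi rmorphM.
have -> : a * e i 0 * (a^* * (e j 0)^*) = (a * a^*) * (e i 0 * (e j 0)^*) by ring.
by rewrite haa mul1r.
Qed.
End S.

Theorem corollary1 (C : numClosedFieldType) (psi phi e f : 'cV[C]_2) :
  unit_vector psi -> unit_vector phi -> unit_vector e -> unit_vector f ->
  let M := 2^-1 * (1 + `|inner e f|) in
  ((exists Psi, depol_channels Psi /\ success psi phi e f Psi = M) /\
   (forall Psi, depol_channels Psi -> success psi phi e f Psi <= M)) /\
  (M = 1 <-> `|inner e f| = 1) /\
  (jointly_convertible (@depol_channels C) psi phi e f <-> `|inner e f| = 1).
Proof.
move=> hp hq he hf M.
have two0 : (2 : C) != 0 by rewrite pnatr_eq0.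
split; [split|split].
- exact: exist_max.
- move=> Psi [rho [hr ->]]; rewrite success_depol // -mulrDr /M.
  by rewrite ler_wpM2l ?invr_ge0 ?ler0n // upper.
- rewrite /M; split => [hM | ->].
    have h2 : 1 + `|inner e f| = 1 + 1.
      have -> : 1 + `|inner e f| = 2 * (2^-1 * (1 + `|inner e f|)) by field.
      by rewrite hM mulr1.
    exact: (addrI 1 h2).
  by field.
- split.
    move=> [Psi [[rho [hr ->]] [h1 h2]]].
    rewrite /depol tr_proj hp scale1r in h1.
    rewrite /depol tr_proj hq scale1r in h2.
    have : braket e (proj f) e = 1 by rewrite -h2 h1 braket_proj he conjC1 mulr1.
    rewrite braket_proj -normCK => /eqP; rewrite sqrp_eq1 ?normr_ge0 //.
    by move/eqP.
  move=> hs; exists (depol (proj e)); split.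
    exists (proj e); split => //; rewrite -[proj e]scale1r; apply: dens_proj; first exact: ler01.
    by rewrite he mul1r.
  by rewrite /depol !tr_proj hp hq !scale1r (@proj_eq C e f he hf hs).
Qed.
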